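(* Let $k$ be a positive integer, $a\ge 1$ an integer and $G=K_a\,\square\,K_a$. Then $\gamma_{P,k}(G)=a-k$ if $a\ge k+2$, and $\gamma_{P,k}(G)=1$ otherwise.
   Context: $K_a$ is the complete graph on $a$ vertices and $\square$ denotes the Cartesian product of graphs. $N_G[v]$ is the closed neighbourhood of $v$, and $N_G[S]$ the union of closed neighbourhoods of vertices of $S$. For $S\subseteq V(G)$, define $\mathcal{P}^{0}_{G,k}(S)=N_G[S]$ and $\mathcal{P}^{i+1}_{G,k}(S)=\bigcup\{N_G[v] : v\in \mathcal{P}^{i}_{G,k}(S),\ |N_G[v]\setminus \mathcal{P}^{i}_{G,k}(S)|\le k\}$; these increase and stabilize to $\mathcal{P}^{\infty}_{G,k}(S)$. $S$ is a $k$-power dominating set if $\mathcal{P}^{\infty}_{G,k}(S)=V(G)$; $\gamma_{P,k}(G)$ is the minimum size of such a set. *)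

(* Defs.v *)
From mathcomp Require Import all_boot.
Set Implicit Arguments. Unset Strict Implicit. Unset Printing Implicit Defensive.

(* A simple graph is a symmetric irreflexive relation [e] on a finite type. *)
Section Graphs.
Variable T : finType.
Variable e : rel T.

Definition cnbhd (v : T) : {set T} := [set u | (u == v) || e v u].
Definition cnbhdS (S : {set T}) : {set T} := \bigcup_(v in S) cnbhd v.

Definition pstep (k : nat) (P : {set T}) : {set T} :=
  \bigcup_(v in P | #|cnbhd v :\: P| <= k) cnbhd v.

Definition pdom (k : nat) (S : {set T}) (i : nat) : {set T} :=
  iter i (pstep k) (cnbhdS S).

(* P^oo: the sequence increases in a finite set, so it is stable after #|T| steps *)
Definition pdom_inf (k : nat) (S : {set T}) : {set T} := pdom k S #|T|.

Definition kpds (k : nat) (S : {set T}) : bool := pdom_inf k S == [set: T].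

(* gamma_{P,k}(G): minimum size of a k-power dominating set
   (the whole vertex set is always one, so #|T| is a valid default) *)
Definition gammaPk (k : nat) : nat :=
  \big[minn/#|T|]_(S : {set T} | kpds k S) #|S|.
End Graphs.

Definition complete_rel (a : nat) : rel 'I_a := fun x y => x != y.

Definition cart_rel (T1 T2 : finType) (e1 : rel T1) (e2 : rel T2) : rel (T1 * T2) :=
  fun x y => ((x.1 == y.1) && e2 x.2 y.2) || ((x.2 == y.2) && e1 x.1 y.1).

Definition KaKa (a : nat) : rel ('I_a * 'I_a) :=
  cart_rel (@complete_rel a) (@complete_rel a).

(* Main.v *)
Require Import Defs.
From mathcomp Require Import all_boot.
From mathcomp Require Import zify.

Lemma bigmin_eq (I : finType) (P : pred I) (F : I -> nat) d m :
  (exists2 i, P i & F i = m) -> (forall i, P i -> m <= F i) -> m <= d ->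
  \big[minn/d]_(i | P i) F i = m.
Proof.
move=> [i Pi Fi] hge hd; apply/eqP; rewrite eqn_leq; apply/andP; split.
  rewrite -Fi; have : i \in index_enum I by rewrite mem_index_enum.
  elim: (index_enum I) => // j r IH; rewrite inE big_cons => /orP [/eqP <-|/IH].
    by rewrite Pi geq_minl.
  by case: (P j) => // h; rewrite geq_min h orbT.
elim/big_ind: _ => //.
by move=> x y hx hy; rewrite leq_min hx hy.
Qed.

Lemma mem_cn a (u v : 'I_a * 'I_a) :
  (u \in cnbhd (@KaKa a) v) = (u.1 == v.1) || (u.2 == v.2).
Proof.
case: u v => [x1 x2] [y1 y2]; rewrite inE /KaKa /cart_rel /complete_rel /= xpair_eqE.
rewrite (eq_sym y1) (eq_sym y2).
by case: (x1 == y1); case: (x2 == y2).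
Qed.

Lemma pstep_setT (T : finType) (e : rel T) k : pstep e k setT = setT.
Proof.
apply/setP => u; rewrite inE; apply/bigcupP; exists u.
  by rewrite inE setDT cards0.
by rewrite inE eqxx.
Qed.

Lemma upper a k m (S : {set 'I_a * 'I_a}) (h0 : 0 < m) (hma : m <= a)
  (hk : a <= m + k) : (forall i : 'I_a, i < m -> (i,i) \in S) -> kpds (@KaKa a) k S.
Proof.
move=> HS.
have ha : 0 < a by apply: leq_trans hma.
pose z := Ordinal ha.
have P0row : forall u : 'I_a * 'I_a, u.1 < m -> u \in cnbhdS (@KaKa a) S.
  move=> u hu; apply/bigcupP; exists (u.1, u.1); first exact: HS.
  by rewrite mem_cn /= eqxx.
have P1 : pstep (@KaKa a) k (cnbhdS (@KaKa a) S) = setT.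
  apply/setP => -[r c]; rewrite inE; apply/bigcupP; exists (z, c); last first.
    by rewrite mem_cn /= eqxx orbT.
  rewrite P0row //=.
  have hsub : cnbhd (@KaKa a) (z, c) :\: cnbhdS (@KaKa a) S \subset
       [set ((insubd z (m + x) : 'I_a), c) | x : 'I_k].
    apply/subsetP => -[y c'].
    rewrite in_setD mem_cn /= => /andP [hn hnb].
    have hy : m <= y by rewrite leqNgt; apply/negP => hy; move: hn; rewrite P0row.
    have hyz : (y == z) = false.
      by apply/negbTE/negP => /eqP hyz; move: hy; rewrite hyz /= leqNgt h0.
    move: hnb; rewrite hyz /= => /eqP ->.
    have hx : y - m < k by rewrite ltn_subLR // (leq_trans (ltn_ord y)).
    apply/imsetP; exists (Ordinal hx) => //; congr pair.
    by apply: val_inj; rewrite /= val_insubd subnKC // ltn_ord.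
  apply: leq_trans (subset_leq_card hsub) _.
  by apply: leq_trans (leq_imset_card _ _) _; rewrite card_ord.
rewrite /kpds /pdom_inf /pdom.
have : 0 < #|{: 'I_a * 'I_a}| by apply/card_gt0P; exists (z, z).
case: #|_| => // n _.
elim: n => [|n IH]; first by rewrite /= P1.
by rewrite iterS (eqP IH) pstep_setT.
Qed.

Lemma lower a k (S : {set 'I_a * 'I_a}) : #|S| + k < a -> ~~ kpds (@KaKa a) k S.
Proof.
move=> hS.
pose R := [set s.1 | s in S]; pose C := [set s.2 | s in S].
have hR : #|R| + k < a by apply: leq_ltn_trans hS; rewrite leq_add2r leq_imset_card.
have hC : #|C| + k < a by apply: leq_ltn_trans hS; rewrite leq_add2r leq_imset_card.
pose Q := [set u : 'I_a * 'I_a | (u.1 \in R) || (u.2 \in C)].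
have cR : k < #|~: R| by rewrite cardsCs setCK card_ord ltn_subRL; exact: hR.
have cC : k < #|~: C| by rewrite cardsCs setCK card_ord ltn_subRL; exact: hC.
have inv : forall n, pdom (@KaKa a) k S n \subset Q.
  elim => [|n IH].
    apply/bigcupsP => s sS; apply/subsetP => u; rewrite mem_cn inE.
    case/orP => /eqP ->; first by rewrite imset_f.
    by rewrite (imset_f (fun s : 'I_a * 'I_a => s.2)) ?orbT.
  rewrite /pdom iterS; apply/bigcupsP => v /andP [vP hk].
  have vQ : v \in Q by apply: (subsetP IH).
  apply/subsetP => u; rewrite mem_cn => hu; apply/negPn/negP => uQ.
  move: uQ vQ; rewrite !inE negb_or => /andP [u1 u2] /orP [v1|v2].
    have e2 : u.2 = v.2.
      by case/orP: hu => /eqP e //; move: u1; rewrite e v1.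
    have X : [set (r, v.2) | r in ~: R] \subset cnbhd (@KaKa a) v :\: pdom (@KaKa a) k S n.
      apply/subsetP => w /imsetP [r rR ->]; rewrite in_setD mem_cn /= eqxx orbT andbT.
      apply/negP => /(subsetP IH); rewrite inE /= -e2 (negbTE u2) orbF.
      by move: rR; rewrite inE => /negbTE ->.
    move: (subset_leq_card X); rewrite card_imset; last by move=> x y [].
    by move=> h; move: (leq_trans cR h); rewrite ltnNge hk.
  have e1 : u.1 = v.1.
    by case/orP: hu => /eqP e //; move: u2; rewrite e v2.
  have X : [set (v.1, c) | c in ~: C] \subset cnbhd (@KaKa a) v :\: pdom (@KaKa a) k S n.
    apply/subsetP => w /imsetP [c cC' ->]; rewrite in_setD mem_cn /= eqxx andbT.
    apply/negP => /(subsetP IH); rewrite inE /= -e1 (negbTE u1) /=.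
    by move: cC'; rewrite inE => /negbTE ->.
  move: (subset_leq_card X); rewrite card_imset; last by move=> x y [].
  by move=> h; move: (leq_trans cC h); rewrite ltnNge hk.
have [r rR] : exists r, r \in ~: R by apply/card_gt0P; apply: leq_ltn_trans cR.
have [c cC'] : exists c, c \in ~: C by apply/card_gt0P; apply: leq_ltn_trans cC.
apply/negP => /eqP hT.
have : (r, c) \in Q by apply: (subsetP (inv #|{: 'I_a * 'I_a}|)); rewrite /pdom_inf in hT; rewrite hT inE.
by move: rR cC'; rewrite !inE /= => /negbTE -> /negbTE ->.
Qed.

Lemma empty_not a k : 0 < a -> ~~ kpds (@KaKa a) k set0.
Proof.
move=> ha; pose z := Ordinal ha.
have inv : forall n, pdom (@KaKa a) k set0 n \subset set0.
  elim => [|n IH]; first by apply/bigcupsP => s; rewrite inE.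
  rewrite /pdom iterS; apply/bigcupsP => v /andP [vP _].
  by move: (subsetP IH _ vP); rewrite inE.
apply/negP => /eqP hT.
have := subsetP (inv #|{: 'I_a * 'I_a}|) (z, z).
by rewrite /pdom_inf in hT; rewrite hT !inE => /(_ isT).
Qed.

Theorem mainTheorem5 (k a : nat) (hk : 0 < k) (ha : 1 <= a) :
  @gammaPk _ (@KaKa a) k = (if k + 2 <= a then a - k else 1).
Proof.
rewrite /gammaPk card_prod card_ord.
case: ifP => hka.
  have hm : a - k <= a by apply: leq_subr.
  apply: bigmin_eq.
  - exists [set (widen_ord hm i, widen_ord hm i) | i : 'I_(a - k)].
      apply: (@upper a k (a - k)).
      + by rewrite subn_gt0 (leq_trans _ hka) // addn2.
      + exact: hm.
      + by rewrite subnK // (leq_trans _ hka) // leq_addr.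
      + move=> i hi; apply/imsetP; exists (Ordinal hi) => //.
        by congr pair; apply: val_inj.
    rewrite card_imset ?card_ord //.
    by move=> x y [] /val_inj.
  - move=> S hS; rewrite leqNgt; apply/negP => hlt.
    move: hS; apply/negP; apply: lower.
    by rewrite -(ltn_add2r k) subnK // (leq_trans _ hka) // leq_addr in hlt.
  - by rewrite (leq_trans hm) // leq_pmulr.
pose z := Ordinal ha.
apply: bigmin_eq.
- exists [set (z, z)]; last by rewrite cards1.
  apply: (@upper a k 1) => //.
    by move/negbT: hka; lia.
  move=> i hi; have -> : i = z by apply: val_inj; rewrite /=; case: (val i) hi.
  by rewrite inE.
- move=> S hS; rewrite lt0n; apply/negP => /eqP /cards0_eq hS0.
  by move: hS; rewrite hS0; apply/negP; apply: empty_not.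
- by rewrite muln_gt0 ha.
Qed.
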